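(* Let $\beta\in(3/2,\beta^*]$. Then $\mathbb P(D)=1$.
   Context: $\beta^*\approx1.5437$ is the real root of $x^3-2x^2+2x=2$. $\vec q_0=(0,0)$, $\vec q_1=(1,0)$, $\vec q_2=(0,1)$, $f_i(\vec z)=(\vec z+\vec q_i)/\beta$. $H=\{(x,y):x<\frac1\beta,\ y<\frac1\beta,\ x+y>\frac{1}{\beta(\beta-1)}\}$; $\tilde C_{01}=\{x\ge\frac1\beta,\ y\ge0,\ x+y\le\frac{1}{\beta(\beta-1)}\}$; $\tilde C_{12}=\{x\ge\frac1\beta,\ y\ge\frac1\beta,\ x+y\le\frac1{\beta-1}\}$; $\tilde C_{02}=\{x\ge0,\ y\ge\frac1\beta,\ x+y\le\frac{1}{\beta(\beta-1)}\}$; for $ij\in\{01,12,02\}$, $C_{ij}=\tilde C_{ij}\setminus\bigl(\bigcup_{n\ge1}f_if_j^n(H)\cup\bigcup_{n\ge1}f_jf_i^n(H)\bigr)$, and $C=C_{01}\cup C_{12}\cup C_{02}$. $\Upsilon=\{0,1,2\}^{\mathbb N}$ with product $\sigma$-algebra and uniform product measure $\mathbb P$. $D$ is the set of $(b_1,b_2,\ldots)\in\Upsilon$ such that $\sum_{i\ge1}\vec q_{b_{j+i-1}}\beta^{-i}\in C$ for infinitely many $j$. *)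

(* Defs.v *)
From HB Require Import structures.
From mathcomp Require Import all_boot all_order all_algebra.
From mathcomp Require Import all_classical all_reals all_analysis.
Set Implicit Arguments. Unset Strict Implicit. Unset Printing Implicit Defensive.
Import Order.TTheory GRing.Theory Num.Theory numFieldNormedType.Exports.
Local Open Scope classical_set_scope.
Local Open Scope ring_scope.

(* Sequences are indexed from 0: (b 0, b 1, ...) stands for (b_1, b_2, ...). *)

Definition seq3 : Type := nat -> 'I_3.
HB.instance Definition _ := gen_eqMixin seq3.
HB.instance Definition _ := gen_choiceMixin seq3.
HB.instance Definition _ := isPointed.Build seq3 (fun _ => ord0).

Definition cyl (w : seq 'I_3) : set seq3 :=
  [set b | forall i, (i < size w)%N -> b i = nth ord0 w i].

Definition cylinders : set (set seq3) := [set A | exists w, A = cyl w].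

(* {0,1,2}^N with the product sigma-algebra (generated by the cylinders) *)
Notation Upsilon := (g_sigma_algebraType cylinders).

Section Geometry.
Variable R : realType.
Variable beta : R.

(* q_0 = (0,0), q_1 = (1,0), q_2 = (0,1) *)
Definition qv (k : nat) : R * R := ((k == 1%N)%:R, (k == 2%N)%:R).

Definition fmap (k : nat) (z : R * R) : R * R :=
  ((z.1 + (qv k).1) / beta, (z.2 + (qv k).2) / beta).

Definition Hset : set (R * R) :=
  [set z | z.1 < beta^-1 /\ z.2 < beta^-1 /\ (beta * (beta - 1))^-1 < z.1 + z.2].

Definition Ct01 : set (R * R) :=
  [set z | beta^-1 <= z.1 /\ 0 <= z.2 /\ z.1 + z.2 <= (beta * (beta - 1))^-1].
Definition Ct12 : set (R * R) :=
  [set z | beta^-1 <= z.1 /\ beta^-1 <= z.2 /\ z.1 + z.2 <= (beta - 1)^-1].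
Definition Ct02 : set (R * R) :=
  [set z | 0 <= z.1 /\ beta^-1 <= z.2 /\ z.1 + z.2 <= (beta * (beta - 1))^-1].

Definition fimg (i j n : nat) : set (R * R) :=
  [set fmap i (iter n (fmap j) w) | w in Hset].

Definition Cij (Ct : set (R * R)) (i j : nat) : set (R * R) :=
  Ct `\` [set z | exists n, (1 <= n)%N /\ (fimg i j n z \/ fimg j i n z)].

Definition Cset : set (R * R) :=
  Cij Ct01 0 1 `|` Cij Ct12 1 2 `|` Cij Ct02 0 2.

(* sum_{i>=1} q_{b_{j+i-1}} beta^{-i}, with 0-based sequences:
   sum_{i>=0} q_{b (j+i)} beta^{-(i+1)} *)
Definition zpt (b : nat -> 'I_3) (j : nat) : R * R :=
  (limn (series (fun i => (qv (b (j + i)%N)).1 / beta ^+ i.+1)),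
   limn (series (fun i => (qv (b (j + i)%N)).2 / beta ^+ i.+1))).

Definition Dset : set Upsilon :=
  [set b | forall N : nat, exists j : nat, (N <= j)%N /\ Cset (zpt b j)].

End Geometry.

(* Main.v *)
Require Import Defs.
From HB Require Import structures.
From mathcomp Require Import all_boot all_order all_algebra.
From mathcomp Require Import all_classical all_reals all_analysis.
From mathcomp Require Import ring lra measurable_realfun.
Import Order.TTheory GRing.Theory Num.Theory numFieldNormedType.Exports.
Local Open Scope classical_set_scope.
Local Open Scope ring_scope.
Set Implicit Arguments. Unset Strict Implicit. Unset Printing Implicit Defensive.


Definition Pre (L : nat) (p : pred (seq 'I_3)) : set seq3 := [set b | p (mkseq b L)].
Definition Blk (L : nat) (w : seq 'I_3) : set seq3 :=
  [set b | mkseq (fun i => b (L + i)%N) (size w) = w].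
Definition words L : seq (seq 'I_3) := map val (enum {: L.-tuple 'I_3}).

Lemma mem_words u L : (u \in words L) = (size u == L).
Proof.
apply/idP/idP.
  by case/mapP => t _ ->; rewrite size_tuple.
move/eqP=> su; apply/mapP; exists (Tuple (introT eqP su)) => //.
by rewrite mem_enum.
Qed.

Lemma uniq_words L : uniq (words L).
Proof. by rewrite map_inj_uniq ?enum_uniq //; exact: val_inj. Qed.

Lemma bigU_mem (U : seq (seq 'I_3)) (F : seq 'I_3 -> set seq3) b :
  (\big[setU/set0]_(u <- U) F u) b <-> exists2 u, u \in U & F u b.
Proof.
elim: U => [|u U IH]; first by rewrite big_nil; split => // -[].
rewrite big_cons; split.
  case=> [h|/IH [v vU h]]; first by exists u; rewrite ?mem_head.
  by exists v; rewrite // in_cons vU orbT.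
case=> v; rewrite in_cons => /orP [/eqP ->|vU] h; first by left.
by right; apply/IH; exists v.
Qed.

Lemma cyl_size b u L : size u = L -> cyl u b -> mkseq b L = u.
Proof.
move=> su cb; apply: (@eq_from_nth _ ord0); first by rewrite size_mkseq su.
move=> i; rewrite size_mkseq => iL; rewrite nth_mkseq // cb //; by rewrite su.
Qed.

Lemma mkseq_cyl b L : cyl (mkseq b L) b.
Proof. by move=> i; rewrite size_mkseq => iL; rewrite nth_mkseq. Qed.

Lemma mkseqD T (f : nat -> T) m n :
  mkseq f (m + n) = mkseq f m ++ mkseq (fun i => f (m + i)%N) n.
Proof.
rewrite /mkseq iotaD map_cat add0n; congr (_ ++ _).
by rewrite -[in LHS](addn0 m) iotaDl -map_comp.
Qed.

Lemma cyl_meas u : measurable (cyl u : set Upsilon).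
Proof. by apply: sub_sigma_algebra; exists u. Qed.

Lemma Pre_eq L p : Pre L p = \big[setU/set0]_(u <- [seq u <- words L | p u]) cyl u.
Proof.
apply/seteqP; split => b.
  move=> pb; apply/bigU_mem; exists (mkseq b L); last exact: mkseq_cyl.
  by rewrite mem_filter pb mem_words size_mkseq /=.
case/bigU_mem => u; rewrite mem_filter mem_words => /andP [pu /eqP su] cb.
by rewrite /Pre /= (cyl_size su cb).
Qed.

Lemma PreBlk_eq L p w : Pre L p `&` Blk L w =
  \big[setU/set0]_(u <- map (cat^~ w) ([seq u <- words L | p u])) cyl u.
Proof.
apply/seteqP; split => b.
  move=> [pb bb]; apply/bigU_mem; exists (mkseq b L ++ w).
    by apply/map_f; rewrite mem_filter pb mem_words size_mkseq /=.
  by rewrite -bb -mkseqD; exact: mkseq_cyl.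
case/bigU_mem => v /mapP [u]; rewrite mem_filter mem_words => /andP [pu /eqP su] -> cb.
have := cyl_size (erefl _) cb; rewrite size_cat su mkseqD => /eqP.
rewrite eqseq_cat ?size_mkseq // => /andP [/eqP e1 /eqP e2].
by split; rewrite /Pre /Blk /= ?e1 ?e2.
Qed.

Lemma PreD_eq L p w : Pre L p `&` ~` Blk L w =
  Pre (L + size w) (fun u => p (take L u) && (drop L u != w)).
Proof.
apply/seteqP; split => b; rewrite /Pre /Blk /= mkseqD.
  rewrite take_size_cat ?size_mkseq // drop_size_cat ?size_mkseq //.
  by move=> [-> /eqP ->].
rewrite take_size_cat ?size_mkseq // drop_size_cat ?size_mkseq //.
by case/andP => -> /eqP.
Qed.

Section Prob.
Variables (R : realType) (P : probability Upsilon R).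
Hypothesis hP : forall w : seq 'I_3, P (cyl w) = ((3%:R ^- size w : R))%:E.

Lemma measure_union U n : uniq U -> all (fun u => size u == n) U ->
  P (\big[setU/set0]_(u <- U) cyl u) = ((size U)%:R * 3%:R ^- n : R)%:E.
Proof.
elim: U => [|u U IH]; first by rewrite big_nil measure0 mul0r.
rewrite /= => /andP [uU uq] /andP [/eqP su aU].
rewrite big_cons measureU.
- apply: (etrans (congr2 (fun a b => (a + b)%E) (hP u) (IH uq aU))).
  by rewrite su -EFinD /= -[(size U).+1]add1n natrD mulrDl mul1r.
- exact: cyl_meas.
- by apply: bigsetU_measurable => i _; exact: cyl_meas.
apply/seteqP; split => // b [cb /bigU_mem [v vU cv]].
move/allP: aU => /(_ v vU) /eqP sv.
have e1 := cyl_size su cb; have e2 := cyl_size sv cv.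
by move: uU; rewrite -e1 e2 vU.
Qed.

Lemma Pre_meas L p : measurable (Pre L p : set Upsilon).
Proof. by rewrite Pre_eq; apply: bigsetU_measurable => i _; exact: cyl_meas. Qed.

Lemma Blk_meas L w : measurable (Blk L w : set Upsilon).
Proof.
have -> : Blk L w = Pre L predT `&` Blk L w by apply/seteqP; split => b //= [].
by rewrite PreBlk_eq; apply: bigsetU_measurable => i _; exact: cyl_meas.
Qed.

Lemma P_Pre L p : P (Pre L p) = ((count p (words L))%:R * 3%:R ^- L : R)%:E.
Proof.
rewrite Pre_eq (@measure_union _ L) ?size_filter //; first exact/filter_uniq/uniq_words.
by apply/allP => u; rewrite mem_filter mem_words => /andP [].
Qed.

Lemma P_PreBlk L p w : P (Pre L p `&` Blk L w) =
  ((count p (words L))%:R * 3%:R ^- (L + size w) : R)%:E.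
Proof.
rewrite PreBlk_eq (@measure_union _ (L + size w)) ?size_map ?size_filter //.
  rewrite map_inj_in_uniq ?filter_uniq ?uniq_words // => u v.
  rewrite !mem_filter !mem_words => /andP [_ /eqP su] /andP [_ /eqP sv] /eqP.
  by rewrite eqseq_cat ?su ?sv // => /andP [/eqP].
apply/allP => u /mapP [v]; rewrite mem_filter mem_words => /andP [_ /eqP sv] ->.
by rewrite size_cat sv.
Qed.

End Prob.


Lemma geo_zero (R : realType) (x q : R) : 0 <= q < 1 ->
  (forall K, x <= q ^+ K) -> x <= 0.
Proof.
move=> /andP [q0 q1] h.
have c : q ^+ n @[n --> \oo] --> (0 : R) by apply: cvg_expr; rewrite ger0_norm.
rewrite -(cvg_lim _ c) //; apply: limr_ge; first by apply/cvg_ex; exists 0.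
by near=> K; exact: h.
Unshelve. all: end_near.
Qed.

Section Prob2.
Variables (R : realType) (P : probability Upsilon R).
Hypothesis hP : forall w : seq 'I_3, P (cyl w) = ((3%:R ^- size w : R))%:E.
Variables (w : seq 'I_3) (N : nat).
Let m := size w.

Fixpoint pK (K : nat) : pred (seq 'I_3) :=
  if K is K'.+1 then fun u => pK K' (take (N + K' * m) u) && (drop (N + K' * m) u != w)
  else predT.

Definition FK K := Pre (N + K * m) (pK K).

Lemma FK_S K : FK K.+1 = FK K `&` ~` Blk (N + K * m) w.
Proof. by rewrite /FK PreD_eq mulSnr addnA. Qed.

Definition rK K : R := (count (pK K) (words (N + K * m)))%:R * 3%:R ^- (N + K * m).

Lemma P_FK K : P (FK K) = (rK K)%:E.
Proof. by rewrite /FK (P_Pre hP). Qed.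

Lemma rK_S K : rK K.+1 = (1 - 3%:R ^- m) * rK K.
Proof.
have h : (P (FK K) < +oo)%E -> P (FK K `\` Blk (N + K * m) w) = (P (FK K) - P (FK K `&` Blk (N + K * m) w))%E.
  exact: (@measureD _ _ _ P _ _ (Pre_meas (N + K * m) (pK K)) (Blk_meas (N + K * m) w)).
rewrite setDE -FK_S !P_FK (P_PreBlk hP) in h.
have /h : ((rK K)%:E < +oo)%E by rewrite ltry.
move=> /(congr1 fine) /= ->; rewrite /rK; set L := (N + K * m)%N.
set c := _%:R; rewrite -/m exprD invfM; ring.
Qed.

Lemma rK_le K : rK K <= (1 - 3%:R ^- m) ^+ K.
Proof.
have q0 : 0 <= 1 - 3%:R ^- m :> R.
  by rewrite subr_ge0 invf_le1 ?exprn_ege1 ?exprn_gt0 // ler1n.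
elim: K => [|K IH].
  have := probability_le1 P (Pre_meas (N + 0 * m) (pK 0)).
  by rewrite -/(FK 0) P_FK lee_fin expr0.
by rewrite rK_S exprS ler_wpM2l.
Qed.

Definition EN := \bigcap_(j in [set j | (N <= j)%N]) ~` Blk j w.

Lemma EN_meas : measurable (EN : set Upsilon).
Proof.
apply: bigcap_measurable; first by exists N => /=.
by move=> j _; apply: measurableC; exact: Blk_meas.
Qed.

Lemma EN_FK K : EN `<=` FK K.
Proof.
move=> b hb; elim: K => [|K IH]; first by [].
rewrite FK_S; split => //; apply: hb => /=; exact: leq_addr.
Qed.

Lemma P_EN (wn : w != [::]) : P EN = 0%E.
Proof.
have q1 : 0 <= (1 - 3%:R ^- m : R) < 1.
  rewrite subr_ge0 invf_le1 ?exprn_ege1 ?exprn_gt0 ?ler1n //=.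
apply/eqP; rewrite eq_le measure_ge0 andbT.
have : (P EN <= (fine (P EN))%:E)%E.
  by rewrite fineK // ge0_fin_numE ?measure_ge0 // (le_lt_trans (probability_le1 P EN_meas)) ?ltry.
move/le_trans; apply; rewrite lee_fin.
apply: (@geo_zero _ _ _ q1) => K; rewrite -lee_fin fineK; last first.
  by rewrite ge0_fin_numE ?measure_ge0 // (le_lt_trans (probability_le1 P EN_meas)) ?ltry.
apply: (@le_trans _ _ (P (FK K))); last by rewrite P_FK lee_fin rK_le.
apply: le_measure; rewrite ?inE; [exact: EN_meas|exact: Pre_meas|exact: EN_FK].
Qed.

End Prob2.


Section Ana.
Variables (R : realType) (beta : R).
Hypothesis b1 : 1 < beta.

Definition tm (c : nat -> R) := fun i => c i / beta ^+ i.+1.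
Definition Xs (c : nat -> R) := limn (series (tm c)).

Let b0 : 0 < beta. Proof. exact: lt_trans b1. Qed.
Let bn0 : beta != 0. Proof. exact: lt0r_neq0. Qed.
Let bm0 : beta - 1 != 0. Proof. by rewrite subr_eq0 gt_eqF. Qed.
Let bm1 : 0 < beta - 1. Proof. by rewrite subr_gt0. Qed.

Lemma series0 (u : nat -> R) : series u 0 = 0.
Proof. by rewrite /series /= big_geq. Qed.

Lemma psum_bound c d n : (forall i, 0 <= c i) -> (forall i, 0 <= d i) ->
  (forall i, c i + d i <= 1) ->
  series (tm c) n + series (tm d) n <= (1 - beta ^- n) / (beta - 1).
Proof.
move=> c0 d0 cd1; elim: n => [|n IH].
  by rewrite !series0 expr0 invr1 subrr mul0r addr0.
rewrite !seriesSr /tm.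
have tp : 0 < beta ^+ n by rewrite exprn_gt0.
have e : (1 - beta ^- n) / (beta - 1) + (beta ^+ n.+1)^-1 = (1 - beta ^- n.+1) / (beta - 1).
  rewrite exprS; field; rewrite bm0 bn0 lt0r_neq0 //.
rewrite -e; apply: le_trans (lerD IH (_ : (c n + d n) / beta ^+ n.+1 <= (beta ^+ n.+1)^-1)).
  by rewrite mulrDl addrACA.
by rewrite ler_pdivrMr ?exprn_gt0 // mulVf ?expf_neq0.
Qed.

Lemma series_ge0 c n : (forall i, 0 <= c i) -> 0 <= series (tm c) n.
Proof.
move=> c0; rewrite /series /=; apply: sumr_ge0 => i _.
by rewrite /tm divr_ge0 // exprn_ge0 // ltW.
Qed.

Lemma series_nd c : (forall i, 0 <= c i) -> nondecreasing_seq (series (tm c)).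
Proof.
move=> c0; apply: nondecreasing_series => i _ _.
by rewrite /tm divr_ge0 // exprn_ge0 // ltW.
Qed.

Lemma series_ub c n : (forall i, 0 <= c i <= 1) -> series (tm c) n <= (beta - 1)^-1.
Proof.
move=> c01; apply: (@le_trans _ _ (series (tm c) n + series (tm (fun=> 0)) n)).
  by rewrite lerDl series_ge0.
apply: (@le_trans _ _ ((1 - beta ^- n) / (beta - 1))).
  apply: psum_bound.
- by move=> i; case/andP: (c01 i).
- by [].
- by move=> i; rewrite addr0; case/andP: (c01 i).
by rewrite ler_pdivrMr // mulVf // lerBlDr lerDl invr_ge0 (exprn_ge0 _ (ltW b0)).
Qed.

Lemma Xs_cvg c : (forall i, 0 <= c i <= 1) -> cvgn (series (tm c)).
Proof.
move=> c01; apply: nondecreasing_is_cvgn.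
  by apply: series_nd => i; case/andP: (c01 i).
by exists (beta - 1)^-1 => _ [n _ <-]; exact: series_ub.
Qed.

Lemma Xs_ge0 c : (forall i, 0 <= c i <= 1) -> 0 <= Xs c.
Proof.
move=> c01; apply: limr_ge; first exact: Xs_cvg.
by near=> n; apply: series_ge0 => i; case/andP: (c01 i).
Unshelve. all: end_near.
Qed.

Lemma Xs_sum c d : (forall i, 0 <= c i <= 1) -> (forall i, 0 <= d i <= 1) ->
  (forall i, c i + d i <= 1) -> Xs c + Xs d <= (beta - 1)^-1.
Proof.
move=> c01 d01 cd1; rewrite /Xs -limD; [|exact: Xs_cvg|exact: Xs_cvg].
apply: limr_le; first by apply: is_cvgD; exact: Xs_cvg.
near=> n; apply: (@le_trans _ _ ((1 - beta ^- n) / (beta - 1))).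
  apply: psum_bound.
- by move=> i; case/andP: (c01 i).
- by move=> i; case/andP: (d01 i).
- exact: cd1.
by rewrite ler_pdivrMr // mulVf // lerBlDr lerDl invr_ge0 (exprn_ge0 _ (ltW b0)).
Unshelve. all: end_near.
Qed.

Lemma Xs_rec c : (forall i, 0 <= c i <= 1) ->
  Xs c = (c 0%N + Xs (fun i => c i.+1)) / beta.
Proof.
move=> c01.
have c01' : forall i, 0 <= c i.+1 <= 1 by move=> i; exact: c01.
have e : forall n, series (tm c) n.+1 = c 0%N / beta + series (tm (fun i => c i.+1)) n / beta.
  move=> n; rewrite /series /= big_nat_recl // mulr_suml /tm expr1; congr (_ + _).
  by apply: eq_bigr => i _; rewrite exprS invfM mulrA [_ / beta ^+ _ / _]mulrAC.
have h : series (tm c) n.+1 @[n --> \oo] --> c 0%N / beta + Xs (fun i => c i.+1) / beta.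
  under eq_fun do rewrite e.
  apply: cvgD; first exact: cvg_cst.
  apply: cvgMr_tmp; exact: Xs_cvg.
rewrite cvg_shiftS in h; rewrite /Xs (cvg_lim _ h) // mulrDl //.
Qed.

End Ana.


Section Meas.
Variables (R : realType) (beta : R).
Hypothesis b1 : 1 < beta.

Lemma ind_meas n (x : 'I_3) :
  measurable_fun setT (fun b : Upsilon => ((b n == x)%:R : R)).
Proof.
have -> : (fun b : Upsilon => ((b n == x)%:R : R)) = \1_(Blk n [:: x]).
  apply/funext => b; rewrite indicE; case: eqP => [e|ne].
    by rewrite mem_set // /Blk /mkseq /= addn0 e.
  by rewrite memNset // /Blk /mkseq /= addn0 => -[].
apply: measurable_indic; exact: Blk_meas.
Qed.

Lemma coord_meas n (g : 'I_3 -> R) :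
  measurable_fun setT (fun b : Upsilon => g (b n)).
Proof.
pose o0 : 'I_3 := Ordinal (erefl (0 < 3)%N).
pose o1 : 'I_3 := Ordinal (erefl (1 < 3)%N).
pose o2 : 'I_3 := Ordinal (erefl (2 < 3)%N).
have -> : (fun b : Upsilon => g (b n)) = (fun b => g o0 * (b n == o0)%:R + g o1 * (b n == o1)%:R + g o2 * (b n == o2)%:R).
  apply/funext => b; case: (b n) => [[|[|[|k]]] hk] //.
  - have -> : Ordinal hk = o0 by apply: val_inj.
    by rewrite eqxx !mulr1 !mulr0 !addr0.
  - have -> : Ordinal hk = o1 by apply: val_inj.
    by rewrite eqxx !mulr1 !mulr0 add0r addr0.
  - have -> : Ordinal hk = o2 by apply: val_inj.
    by rewrite eqxx !mulr1 !mulr0 !add0r.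
apply: measurable_funD; [apply: measurable_funD|];
  apply: measurable_funM; (exact: measurable_cst || exact: ind_meas).
Qed.

Lemma Xcoord_meas j (g : 'I_3 -> R) : (forall y, 0 <= g y <= 1) ->
  measurable_fun setT (fun b : Upsilon => Xs beta (fun i => g (b (j + i)%N))).
Proof.
move=> g01.
apply: (measurable_fun_cvg (h := fun m (b : Upsilon) => series (tm beta (fun i => g (b (j + i)%N))) m)).
  elim=> [|m IH].
    under eq_fun do rewrite series0; exact: measurable_cst.
  under eq_fun do rewrite seriesSr.
  apply: measurable_funD => //.
  exact: (coord_meas (j + m) (fun y => g y / beta ^+ m.+1)).
move=> b _; apply: Xs_cvg => //.
Qed.

Definition mpair (V : Upsilon -> R * R) :=
  measurable_fun setT (fun b => (V b).1) /\ measurable_fun setT (fun b => (V b).2).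

Lemma lt_meas (f : Upsilon -> R) a : measurable_fun setT f -> measurable [set b | f b < a].
Proof.
move=> mf; have := mf measurableT _ (measurable_itv `]-oo, a[); rewrite setTI.
by congr measurable; apply/seteqP; split => b /=; rewrite in_itv.
Qed.
Lemma le_meas (f : Upsilon -> R) a : measurable_fun setT f -> measurable [set b | f b <= a].
Proof.
move=> mf; have := mf measurableT _ (measurable_itv `]-oo, a]); rewrite setTI.
by congr measurable; apply/seteqP; split => b /=; rewrite in_itv.
Qed.
Lemma gt_meas (f : Upsilon -> R) a : measurable_fun setT f -> measurable [set b | a < f b].
Proof.
move=> mf; have := mf measurableT _ (measurable_itv `]a, +oo[); rewrite setTI.
by congr measurable; apply/seteqP; split => b /=; rewrite in_itv /= andbT.
Qed.
Lemma ge_meas (f : Upsilon -> R) a : measurable_fun setT f -> measurable [set b | a <= f b].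
Proof.
move=> mf; have := mf measurableT _ (measurable_itv `[a, +oo[); rewrite setTI.
by congr measurable; apply/seteqP; split => b /=; rewrite in_itv /= andbT.
Qed.

Definition finv (k : nat) (z : R * R) : R * R :=
  (beta * z.1 - (qv R k).1, beta * z.2 - (qv R k).2).

Lemma mpair_finv V k : mpair V -> mpair (fun b => finv k (V b)).
Proof.
move=> [m1 m2]; split => /=; apply: measurable_funB;
  (apply: measurable_funM => //; exact: measurable_cst) || exact: measurable_cst.
Qed.

Lemma mpair_iter V k n : mpair V -> mpair (fun b => iter n (finv k) (V b)).
Proof.
move=> mV; elim: n => [|n IH] //=; exact: (mpair_finv k IH).
Qed.

Lemma H_meas V : mpair V -> measurable [set b | Hset beta (V b)].
Proof.
move=> [m1 m2].
have -> : [set b | Hset beta (V b)] = [set b | (V b).1 < beta^-1] `&` [set b | (V b).2 < beta^-1]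
   `&` [set b | (beta * (beta - 1))^-1 < (V b).1 + (V b).2].
  by apply/seteqP; split => b /=; [move=> [? [? ?]]|move=> [[? ?] ?]].
apply: measurableI; [apply: measurableI|]; [exact: lt_meas|exact: lt_meas|].
apply: gt_meas; exact: measurable_funD.
Qed.

Lemma fmap_finv k z : Defs.fmap beta k (finv k z) = z.
Proof.
have bn0 : beta != 0 by rewrite gt_eqF // (lt_trans ltr01 b1).
by case: z => x y; rewrite /Defs.fmap /finv /=; congr pair; field.
Qed.

Lemma finv_fmap k z : finv k (Defs.fmap beta k z) = z.
Proof.
have bn0 : beta != 0 by rewrite gt_eqF // (lt_trans ltr01 b1).
by case: z => x y; rewrite /Defs.fmap /finv /=; congr pair; field.
Qed.

Lemma fimgE i j n z : fimg beta i j n z <-> Hset beta (iter n (finv j) (finv i z)).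
Proof.
have e1 : forall n w, iter n (finv j) (iter n (Defs.fmap beta j) w) = w.
  elim=> [|m IH] w //; rewrite [iter m.+1 (finv j) _]iterSr iterS finv_fmap; exact: IH.
have e2 : forall n w, iter n (Defs.fmap beta j) (iter n (finv j) w) = w.
  elim=> [|m IH] w //; rewrite [iter m.+1 (Defs.fmap beta j) _]iterSr iterS fmap_finv; exact: IH.
split.
  by case=> w hw <-; rewrite finv_fmap e1.
by move=> h; exists (iter n (finv j) (finv i z)) => //; rewrite e2 fmap_finv.
Qed.

Lemma fimg_meas V i j n : mpair V -> measurable [set b | fimg beta i j n (V b)].
Proof.
move=> mV; have -> : [set b | fimg beta i j n (V b)] =
   [set b | Hset beta (iter n (finv j) (finv i (V b)))].
  by apply/seteqP; split => b /= /fimgE.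
apply: (H_meas (V := fun b => iter n (finv j) (finv i (V b)))).
exact/mpair_iter/mpair_finv.
Qed.

Lemma Cij_meas V (Ct : set (R * R)) i j : mpair V -> measurable [set b | Ct (V b)] ->
  measurable [set b | Cij beta Ct i j (V b)].
Proof.
move=> mV mC.
have -> : [set b | Cij beta Ct i j (V b)] = [set b | Ct (V b)] `\`
   \bigcup_(n in [set n | (1 <= n)%N]) ([set b | fimg beta i j n (V b)] `|` [set b | fimg beta j i n (V b)]).
  apply/seteqP; split => b /=.
    move=> [hC hn]; split => // -[n /= n1 h]; apply: hn; exists n; split => //.
  move=> [hC hn]; split => // -[n [n1 h]]; apply: hn; exists n => //.
apply: measurableD => //; apply: bigcup_measurable => n _.
by apply: measurableU; exact: fimg_meas.
Qed.

Lemma Cset_meas V : mpair V -> measurable [set b | Cset beta (V b)].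
Proof.
move=> mV; have [m1 m2] := mV.
have m12 : measurable_fun setT (fun b => (V b).1 + (V b).2) by exact: measurable_funD.
have -> : [set b | Cset beta (V b)] = [set b | Cij beta (Ct01 beta) 0 1 (V b)] `|`
   [set b | Cij beta (Ct12 beta) 1 2 (V b)] `|` [set b | Cij beta (Ct02 beta) 0 2 (V b)] by [].
apply: measurableU; [apply: measurableU|]; apply: Cij_meas => //.
- have -> : [set b | Ct01 beta (V b)] = [set b | beta^-1 <= (V b).1] `&` [set b | 0 <= (V b).2]
     `&` [set b | (V b).1 + (V b).2 <= (beta * (beta - 1))^-1].
    by apply/seteqP; split => b /=; [move=> [? [? ?]]|move=> [[? ?] ?]].
  apply: measurableI; [apply: measurableI|]; [exact: ge_meas|exact: ge_meas|exact: le_meas].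
- have -> : [set b | Ct12 beta (V b)] = [set b | beta^-1 <= (V b).1] `&` [set b | beta^-1 <= (V b).2]
     `&` [set b | (V b).1 + (V b).2 <= (beta - 1)^-1].
    by apply/seteqP; split => b /=; [move=> [? [? ?]]|move=> [[? ?] ?]].
  apply: measurableI; [apply: measurableI|]; [exact: ge_meas|exact: ge_meas|exact: le_meas].
- have -> : [set b | Ct02 beta (V b)] = [set b | 0 <= (V b).1] `&` [set b | beta^-1 <= (V b).2]
     `&` [set b | (V b).1 + (V b).2 <= (beta * (beta - 1))^-1].
    by apply/seteqP; split => b /=; [move=> [? [? ?]]|move=> [[? ?] ?]].
  apply: measurableI; [apply: measurableI|]; [exact: ge_meas|exact: ge_meas|exact: le_meas].
Qed.

Lemma qv01 (y : 'I_3) : 0 <= (qv R y).1 <= 1 /\ 0 <= (qv R y).2 <= 1.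
Proof. by rewrite /qv /=; case: (_ == _); case: (_ == _); rewrite ?ler01 ?lexx. Qed.

Lemma mpair_zpt j : mpair (fun b : Upsilon => zpt beta b j).
Proof.
split.
  exact (Xcoord_meas (g := fun y => (qv R y).1) j (fun y => proj1 (qv01 y))).
exact (Xcoord_meas (g := fun y => (qv R y).2) j (fun y => proj2 (qv01 y))).
Qed.

Lemma Dset_meas : measurable (Dset beta : set Upsilon).
Proof.
have -> : Dset beta = \bigcap_(N in [set: nat])
   \bigcup_(j in [set j | (N <= j)%N]) [set b : Upsilon | Cset beta (zpt beta b j)].
  apply/seteqP; split => b /=.
    move=> h N _; have [j [Nj hj]] := h N; by exists j.
  move=> h N; have [j Nj hj] := h N I; by exists j.
apply: bigcap_measurable; first by exists 0%N.
move=> N _; apply: bigcup_measurable => j _.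
exact: (Cset_meas (mpair_zpt j)).
Qed.

End Meas.


Section Alg.
Variables (R : realType).

Lemma hole01_big (s K x' y' w1 w2 p : R) : 5/8 <= s <= 2/3 -> K * (1 - s) = s ->
  0 <= x' -> 0 <= y' -> x' + y' <= K -> s * K < w1 + w2 -> 0 < p -> p <= s ^+ 3 ->
  s * (w1 * p + (1 - p) * K) = s^+2 + s^+3 + s^+4 + s^+5 * x' -> s * (w2 * p) = s^+5 * y' -> False.
Proof.
move=> /andP [s1 s2] hK x0 y0 xy hw p0 p3 e1 e2.
have sp : 0 < s * p by apply: mulr_gt0 => //; lra.
have h1 : s * p * (s * K) < s * p * (w1 + w2) by rewrite ltr_pM2l.
have s5 : 0 <= s ^+ 5 by apply: exprn_ge0; lra.
have h2 : s^+5 * (x' + y') <= s^+5 * K by rewrite ler_wpM2l.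
have i1 : s * p * K * (1 - s) = s * p * s by rewrite -mulrA hK.
have i2' : s * K * (1 - s) = s * s by rewrite -mulrA hK.
have i2 : s * K - s^+5 * K = s^+2 + s^+3 + s^+4 + s^+5.
  transitivity (s * K * (1 - s) * (1 + s + s^+2 + s^+3)); first by ring.
  by rewrite i2'; ring.
have h3 : s ^+ 2 * p <= s ^+ 2 * s ^+ 3 by rewrite ler_wpM2l // exprn_ge0 //; lra.
have e : s * p * (w1 + w2) + s * (1 - p) * K = s^+2 + s^+3 + s^+4 + s^+5 * (x' + y').
  rewrite -[s * p * _ + _](_ : s * (w1 * p + (1 - p) * K) + s * (w2 * p) = _); last by ring.
  by rewrite e1 e2; ring.
have s4 : 0 < s ^+ 5 by apply: exprn_gt0; lra.
have : s ^+ 2 * p > s ^+ 5.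
  nra.
move=> h4; rewrite -exprD /= in h3; lra.
Qed.


Lemma hole01_1 (s K x' w1 : R) : 5/8 <= s <= 2/3 -> K * (1 - s) = s ->
  0 <= x' -> w1 < s ->
  s * (w1 * s + (1 - s) * K) = s^+2 + s^+3 + s^+4 + s^+5 * x' -> False.
Proof.
move=> /andP [s1 s2] hK x0 hw e1.
have s5 : 0 <= s ^+ 5 * x' by apply: mulr_ge0 => //; apply: exprn_ge0; lra.
rewrite (mulrC (1 - s)) hK in e1.
have s2p : 0 < s * s by nra.
have : s * s * w1 < s * s * s by rewrite ltr_pM2l.
rewrite !exprS expr0 !mulr1 in e1 s5.
nra.
Qed.

Lemma hole01_2 (s K x' w1 : R) : 5/8 <= s <= 2/3 -> K * (1 - s) = s ->
  0 <= x' -> w1 < s ->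
  s * (w1 * s ^+ 2 + (1 - s ^+ 2) * K) = s^+2 + s^+3 + s^+4 + s^+5 * x' -> False.
Proof.
move=> /andP [s1 s2] hK x0 hw e1.
have s5 : 0 <= s ^+ 5 * x' by apply: mulr_ge0 => //; apply: exprn_ge0; lra.
have i : (1 - s ^+ 2) * K = (1 + s) * s.
  by transitivity ((1 + s) * (K * (1 - s))); [ring|rewrite hK].
rewrite i in e1.
have s2p : 0 < s * s * s by nra.
have : s * s * s * w1 < s * s * s * s by rewrite ltr_pM2l.
rewrite !exprS expr0 !mulr1 in e1 s5.
nra.
Qed.

Lemma hole10_big (s x' w1 p : R) : 5/8 <= s <= 2/3 ->
  0 <= x' -> w1 < s -> 0 < p -> p <= s ^+ 2 ->
  s * (w1 * p + 1) = s^+2 + s^+3 + s^+4 + s^+5 * x' -> False.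
Proof.
move=> /andP [s1 s2] x0 hw p0 p2 e1.
have s5 : 0 <= s ^+ 5 * x' by apply: mulr_ge0 => //; apply: exprn_ge0; lra.
have sp : 0 < s * p by nra.
have h1 : s * p * w1 < s * p * s by rewrite ltr_pM2l.
have h2 : s * p * s <= s * s ^+ 2 * s by rewrite ler_wpM2r ?ler_wpM2l //; lra.
rewrite !exprS expr0 !mulr1 in e1 s5 h2.
nra.
Qed.

Lemma hole10_1 (s K x' y' w1 w2 : R) : 5/8 <= s <= 2/3 -> K * (1 - s) = s ->
  0 <= x' -> 0 <= y' -> x' + y' <= K -> s * K < w1 + w2 ->
  s * (w1 * s + 1) = s^+2 + s^+3 + s^+4 + s^+5 * x' -> s * (w2 * s) = s^+5 * y' -> False.
Proof.
move=> /andP [s1 s2] hK x0 y0 xy hw e1 e2.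
have s5 : 0 <= s ^+ 5 by apply: exprn_ge0; lra.
have h2 : s^+5 * (x' + y') <= s^+5 * K by rewrite ler_wpM2l.
have i2' : s * K * (1 - s) = s * s by rewrite -mulrA hK.
have i2 : s * K - s^+5 * K = s^+2 + s^+3 + s^+4 + s^+5.
  transitivity (s * K * (1 - s) * (1 + s + s^+2 + s^+3)); first by ring.
  by rewrite i2'; ring.
have i3 : s * K - s^+3 * K = s^+2 + s^+3.
  transitivity (s * K * (1 - s) * (1 + s)); first by ring.
  by rewrite i2'; ring.
have s2p : 0 < s * s by nra.
have h1 : s * s * (s * K) < s * s * (w1 + w2) by rewrite ltr_pM2l.
have key : s + s ^+ 2 <= 1 + s ^+ 4.
  have : 0 <= (1 - s) * (1 - s ^+ 2 - s ^+ 3).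
    apply: mulr_ge0; first lra.
    rewrite !exprS expr0 !mulr1; nra.
  move=> h; rewrite !exprS expr0 !mulr1 in h *; nra.
rewrite !exprS expr0 !mulr1 in e1 e2 h2 i2 i3 h1 key.
nra.
Qed.

Lemma ct01 (s K x' y' : R) : 5/8 <= s <= 2/3 -> K * (1 - s) = s ->
  0 <= x' -> 0 <= y' -> x' + y' <= K ->
  [/\ s <= s^+2 + s^+3 + s^+4 + s^+5 * x', 0 <= s^+5 * y' &
      s^+2 + s^+3 + s^+4 + s^+5 * x' + s^+5 * y' <= s * K].
Proof.
move=> /andP [s1 s2] hK x0 y0 xy.
have s5 : 0 <= s ^+ 5 by apply: exprn_ge0; lra.
have h2 : s^+5 * (x' + y') <= s^+5 * K by rewrite ler_wpM2l.
have i2' : s * K * (1 - s) = s * s by rewrite -mulrA hK.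
have i2 : s * K - s^+5 * K = s^+2 + s^+3 + s^+4 + s^+5.
  transitivity (s * K * (1 - s) * (1 + s + s^+2 + s^+3)); first by ring.
  by rewrite i2'; ring.
have hx : 0 <= s ^+ 5 * x' by apply: mulr_ge0.
split; first last.
- rewrite mulrDr in h2; lra.
- by apply: mulr_ge0.
have : s <= s ^+ 2 + s ^+ 3.
  rewrite !exprS expr0 !mulr1; nra.
have : 0 <= s ^+ 4 by apply: exprn_ge0; lra.
lra.
Qed.

End Alg.


Section Geo.
Variables (R : realType) (beta : R).
Hypothesis b1l : 1 < beta.

Let b0 : 0 < beta. Proof. exact: lt_trans b1l. Qed.
Let bn0 : beta != 0. Proof. exact: lt0r_neq0. Qed.
Let bm0 : beta - 1 != 0. Proof. by rewrite subr_eq0 gt_eqF. Qed.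

Lemma iter1E n (w : R * R) : iter n (Defs.fmap beta 1) w =
  (w.1 * beta^-1 ^+ n + (1 - beta^-1 ^+ n) * (beta - 1)^-1, w.2 * beta^-1 ^+ n).
Proof.
elim: n => [|n IH]; first by case: w => a c; rewrite /= !expr0 !mulr1 subrr mul0r addr0.
rewrite iterS IH /Defs.fmap /qv /= !exprS; congr pair; last by ring.
field; by rewrite bn0 bm0.
Qed.

Lemma iter0E n (w : R * R) : iter n (Defs.fmap beta 0) w =
  (w.1 * beta^-1 ^+ n, w.2 * beta^-1 ^+ n).
Proof.
elim: n => [|n IH]; first by case: w => a c; rewrite /= !expr0 !mulr1.
by rewrite iterS IH /Defs.fmap /qv /= !exprS !addr0; congr pair; ring.
Qed.

Lemma core (x' y' : R) : 3 / 2 < beta -> beta <= 8 / 5 -> 0 <= x' -> 0 <= y' -> x' + y' <= (beta - 1)^-1 ->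
  Cij beta (Ct01 beta) 0 1
    (beta^-1^+2 + beta^-1^+3 + beta^-1^+4 + beta^-1^+5 * x', beta^-1^+5 * y').
Proof.
move=> b1 b2 x0 y0 xy.
set s := beta^-1; set K := (beta - 1)^-1.
have bs : beta * s = 1 by rewrite /s mulfV.
have s0 : 0 < s by rewrite /s invr_gt0.
have hs : 5/8 <= s <= 2/3 by apply/andP; split; nra.
have hK : K * (1 - s) = s by rewrite /K /s; field; rewrite bn0 bm0.
have hc : (beta * (beta - 1))^-1 = s * K by rewrite invfM.
have sn1 : forall n, 0 < s ^+ n by move=> n; apply: exprn_gt0.
split.
  have [? ? ?] := ct01 hs hK x0 y0 xy.
  by rewrite /Ct01 /= hc; split => //; split.
move=> [n /= [n1 [[w Hw e]|[w Hw e]]]]; move: Hw; rewrite /Hset /= hc -/s => -[h1 [h2 h3]].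
- move: e; rewrite iter1E /Defs.fmap /qv /= -/s -/K !addr0 => -[e1 e2].
  have e1' : s * (w.1 * s ^+ n + (1 - s ^+ n) * K) = s^+2 + s^+3 + s^+4 + s^+5 * x'.
    by rewrite -e1 mulrC.
  have e2' : s * (w.2 * s ^+ n) = s^+5 * y' by rewrite -e2 mulrC.
  clear e1 e2; case: n n1 e1' e2' => [//|[|[|n]]] _ e1' e2'.
  + by apply: (hole01_1 hs hK x0 h1); rewrite expr1 in e1'.
  + exact: (hole01_2 hs hK x0 h1 e1').
  + apply: (hole01_big hs hK x0 y0 xy h3 (sn1 _) _ e1' e2').
    rewrite -addn3 exprD -[X in _ <= X]mul1r; apply: ler_wpM2r; first exact/exprn_ge0/ltW.
    by apply: exprn_ile1; [exact: ltW|case/andP: hs => _ ?; lra].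
- move: e; rewrite iter0E /Defs.fmap /qv /= -/s !addr0 => -[e1 e2].
  have e1' : s * (w.1 * s ^+ n + 1) = s^+2 + s^+3 + s^+4 + s^+5 * x'.
    by rewrite -e1 mulrC.
  have e2' : s * (w.2 * s ^+ n) = s^+5 * y' by rewrite -e2 mulrC.
  clear e1 e2; case: n n1 e1' e2' => [//|[|n]] _ e1' e2'.
  + rewrite expr1 in e1' e2'.
    exact: (hole10_1 hs hK x0 y0 xy h3 e1' e2').
  + apply: (hole10_big hs x0 h1 (sn1 _) _ e1').
    rewrite -addn2 exprD -[X in _ <= X]mul1r; apply: ler_wpM2r; first exact/exprn_ge0/ltW.
    by apply: exprn_ile1; [exact: ltW|case/andP: hs => _ ?; lra].
Qed.

End Geo.


Definition o0 : 'I_3 := Ordinal (erefl (0 < 3)%N).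
Definition o1 : 'I_3 := Ordinal (erefl (1 < 3)%N).
Definition w0 : seq 'I_3 := [:: o0; o1; o1; o1; o0].

Section Fin.
Variables (R : realType) (beta : R).
Hypothesis b1l : 1 < beta.

Lemma Xs5 (c : nat -> R) : (forall i, 0 <= c i <= 1) ->
  Xs beta c = (c 0%N + (c 1%N + (c 2%N + (c 3%N + (c 4%N + Xs beta (fun i => c (5 + i)%N))
     / beta) / beta) / beta) / beta) / beta.
Proof.
move=> c01.
rewrite (Xs_rec b1l c01) (Xs_rec b1l (c := fun i => c i.+1)) //.
rewrite (Xs_rec b1l (c := fun i => c i.+2)) //.
rewrite (Xs_rec b1l (c := fun i => c i.+3)) //.
by rewrite (Xs_rec b1l (c := fun i => c i.+4)).
Qed.

Lemma qv_sum (y : 'I_3) : (qv R y).1 + (qv R y).2 <= 1.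
Proof. by case: y => [[|[|[|k]]] hk] //=; rewrite ?addr0 ?add0r ?lexx ?ler01. Qed.

Lemma zpt_bounds b j : 0 <= (zpt beta b j).1 /\ 0 <= (zpt beta b j).2 /\
  (zpt beta b j).1 + (zpt beta b j).2 <= (beta - 1)^-1.
Proof.
split; [|split].
- exact (Xs_ge0 b1l (c := fun i => (qv R (b (j + i)%N)).1) (fun i => proj1 (qv01 R _))).
- exact (Xs_ge0 b1l (c := fun i => (qv R (b (j + i)%N)).2) (fun i => proj2 (qv01 R _))).
- exact (Xs_sum b1l (c := fun i => (qv R (b (j + i)%N)).1) (d := fun i => (qv R (b (j + i)%N)).2)
     (fun i => proj1 (qv01 R _)) (fun i => proj2 (qv01 R _)) (fun i => qv_sum _)).
Qed.

Lemma zpt_w0 (b : seq3) j : Blk j w0 b ->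
  zpt beta b j = (beta^-1^+2 + beta^-1^+3 + beta^-1^+4 + beta^-1^+5 * (zpt beta b (j + 5)).1,
                  beta^-1^+5 * (zpt beta b (j + 5)).2).
Proof.
rewrite /Blk /mkseq /= => -[e0 e1 e2 e3 e4].
have bn0 : beta != 0 by rewrite gt_eqF // (lt_trans ltr01 b1l).
change (zpt beta b j) with (Xs beta (fun i => (qv R (b (j + i)%N)).1),
                            Xs beta (fun i => (qv R (b (j + i)%N)).2)).
rewrite (Xs5 (fun i => proj1 (qv01 R _))) (Xs5 (fun i => proj2 (qv01 R _))) /=.
rewrite e0 e1 e2 e3 e4 /=.
have -> : (fun i => (qv R (b (j + (5 + i))%N)).1) = (fun i => (qv R (b (j + 5 + i)%N)).1).
  by apply/funext => i; rewrite addnA.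
have -> : (fun i => (qv R (b (j + (5 + i))%N)).2) = (fun i => (qv R (b (j + 5 + i)%N)).2).
  by apply/funext => i; rewrite addnA.
by rewrite /zpt /Xs /tm /=; congr pair; rewrite !exprS expr0 !mulr1; field.
Qed.

Lemma Cset_w0 (b : seq3) j : 3 / 2 < beta -> beta <= 8 / 5 -> Blk j w0 b -> Cset beta (zpt beta b j).
Proof.
move=> h1 h2 hb; left; left; rewrite (zpt_w0 hb).
have [x0 [y0 xy]] := zpt_bounds b (j + 5).
exact: core.
Qed.

End Fin.

Unset Implicit Arguments.

Theorem lemma6p8 (R : realType) (betastar beta : R)
  (hstar : betastar ^+ 3 - 2 * betastar ^+ 2 + 2 * betastar = 2)
  (hlo : 3 / 2 < beta) (hhi : beta <= betastar)
  (P : probability Upsilon R)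
  (hP : forall w : seq 'I_3, P (cyl w) = ((3%:R ^- size w : R))%:E) :
  measurable (Dset beta) /\ P (Dset beta) = 1%:E.
Proof.
have bs8 : betastar < 8 / 5.
  rewrite ltNge; apply/negP => h.
  rewrite !exprS expr0 !mulr1 in hstar.
  have t0 : 0 <= betastar - 8 / 5 by lra.
  have t2 : 0 <= (betastar - 8 / 5) * (betastar - 8 / 5) by nra.
  have t3 : 0 <= (betastar - 8 / 5) * (betastar - 8 / 5) * (betastar - 8 / 5) by apply: mulr_ge0.
  nra.
have b8 : beta <= 8 / 5 by lra.
have b1l : 1 < beta by lra.
have mD := Dset_meas b1l.
split => //.
have sub : ~` Dset beta `<=` \bigcup_N EN w0 N.
  move=> b /= /existsNP [N hN]; exists N => // j /= Nj Bj.
  by apply: hN; exists j; split => //; exact: Cset_w0.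
have neg : P.-negligible (~` Dset beta).
  apply: negligibleS sub _; apply: negligible_bigcup => N.
  exists (EN w0 N); split => //; first exact: EN_meas.
  exact: P_EN.
have /negligibleP : measurable (~` Dset beta) by exact: measurableC.
move=> /(_ _ P) /proj1 /(_ neg) => neg0.
have := etrans (esym (probability_setC P mD)) neg0.
have := probability_le1 P mD; have := measure_ge0 P (Dset beta).
case: (P (Dset beta)) => [r| |] //= r0 r1.
by rewrite -EFinB => -[] /eqP; rewrite subr_eq0 => /eqP <-.
Qed.
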